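(* Let $\sigma$ be a completely erasing $k$-block substitution with $w_\epsilon\ne1^k$ that satisfies the optimality condition. Suppose the vanishing order satisfies $$\lim_{|w|\to\infty}\frac{|w|}{\epsilon(w)}=\infty,$$ meaning that for every $M>0$ there is $N$ such that $|w|/\epsilon(w)>M$ for all $w\in\{0,1\}^*$ with $|w|>N$. Then $f_\sigma$ has infinite topological entropy.
   Context: Notation: $\mathbb I=[0,1]$. $\{0,1\}^*$ and $\{0,1\}^\omega$ denote finite and infinite binary words, and $\epsilon$ is the empty word. For a word $w$, set $0.w=\sum_iw_i2^{-i}$. For $x\in(0,1]$, $\widetilde x$ is the unique infinite binary expansion of $x$ not ending in $0^\infty$. Fix $k\ge2$. An erasing $k$-block substitution is a map $\sigma:\{0,1\}^k\to\{0,1\}^*$ with exactly one block $w_\epsilon$ such that $\sigma(w_\epsilon)=\epsilon$. $\sigma$ is alternating if there are $\sigma_1,\dots,\sigma_k:\{0,1\}\to\{0,1\}^*$ with $\sigma(b_1\cdots b_k)=\sigma_1(b_1)\cdots\sigma_k(b_k)$. It is then extended to all finite or infinite words by $\sigma(u)=\prod_j\sigma_{((j-1)\bmod k)+1}(u_j)$. $\sigma$ is completely erasing if it is erasing and alternating, and every $w\in\{0,1\}^*$ satisfies $\sigma^n(w)=\epsilon$ for some $n\in\mathbb N$. The least such $n$ is the vanishing order $\epsilon(w)$. The map $f_\sigma:\mathbb I\to\mathbb I$ is defined by $f_\sigma(x)=0.\sigma(\widetilde x)$ if $x\in(0,1]$ and $\widetilde x\neq w_\epsilon^\infty$, and $f_\sigma(x)=0$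 otherwise. Optimality condition: every $w\in\{0,1\}^\omega$ can be written as $w=\prod_{i\ge1}\sigma(b_i)$ with blocks $b_i\in\{0,1\}^k$ satisfying $\sigma(b_i)\ne\epsilon$. Topological entropy (Bowen–Dinaburg, for a possibly discontinuous $f$): let $d_n(x,y)=\max_{0\le i\le n}|f^i(x)-f^i(y)|$. A set $S$ is $(n,\delta)$-separated if $d_n(x,y)\ge\delta$ for all distinct $x,y\in S$. Let $s(n,\delta)$ be the maximal cardinality of an $(n,\delta)$-separated subset of $\mathbb I$. Then $h(f)=\lim_{\delta\to0}\limsup_{n\to\infty}\frac1n\log s(n,\delta)$. *)

(* Defs.v *)
From HB Require Import structures.
From mathcomp Require Import all_boot all_order all_algebra.
From mathcomp Require Import all_classical all_reals all_analysis.
Set Implicit Arguments. Unset Strict Implicit. Unset Printing Implicit Defensive.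
Import Order.TTheory GRing.Theory Num.Theory.
Import numFieldNormedType.Exports.
Local Open Scope classical_set_scope.
Local Open Scope ring_scope.

Section Defs.
Variable R : realType.

(* finite binary words are [seq bool]; infinite binary words are [nat -> bool]
   (0-indexed: letter w_{i+1} of the paper is [w i]). *)

Definition binval (w : seq bool) : R :=
  \sum_(i < size w) (nth false w i)%:R / 2 ^+ i.+1.

Definition nonterm_expansion (x : R) (u : nat -> bool) : Prop :=
  (forall N, exists2 n, (N <= n)%N & u n) /\
  (fun m => \sum_(i < m) (u i)%:R / 2 ^+ i.+1 : R) @ \oo --> x.

(* x~ : the (unique, for x in (0,1]) such expansion, chosen classically *)
Definition tilde (x : R) : nat -> bool :=
  xget (fun _ => false) [set u | nonterm_expansion x u].

(* An alternating k-block substitution is given by its components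
   sigma_1, ..., sigma_k, here [sig 0, ..., sig (k-1)] (indices >= k unused). *)
Definition subst_word (k : nat) (sig : nat -> bool -> seq bool) (u : seq bool)
  : seq bool :=
  flatten [seq sig (j %% k)%N (nth false u j) | j <- iota 0 (size u)].

Definition subst_chunks (k : nat) (sig : nat -> bool -> seq bool)
  (u : nat -> bool) (j : nat) : seq bool := sig (j %% k)%N (u j).

Definition ocat (c : nat -> seq bool) (m : nat) : seq bool :=
  flatten [seq c j | j <- iota 0 m].

Definition binval_cat (c : nat -> seq bool) : R :=
  limn (fun m => binval (ocat c m) : R).

Definition erasing_with (k : nat) (sig : nat -> bool -> seq bool)
  (weps : seq bool) : Prop :=
  size weps = k /\ subst_word k sig weps = [::] /\
  (forall b, size b = k -> subst_word k sig b = [::] -> b = weps).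

Definition completely_erasing (k : nat) (sig : nat -> bool -> seq bool)
  (weps : seq bool) : Prop :=
  erasing_with k sig weps /\
  forall w : seq bool, exists n, iter n (subst_word k sig) w = [::].

Definition vanishing_order (k : nat) (sig : nat -> bool -> seq bool)
  (w : seq bool) (n : nat) : Prop :=
  iter n (subst_word k sig) w = [::] /\
  forall m, iter m (subst_word k sig) w = [::] -> (n <= m)%N.

Definition cat_is (c : nat -> seq bool) (w : nat -> bool) : Prop :=
  forall m j, (j < size (ocat c m))%N -> nth false (ocat c m) j = w j.

Definition optimality (k : nat) (sig : nat -> bool -> seq bool) : Prop :=
  forall w : nat -> bool, exists b : nat -> seq bool,
    (forall i, size (b i) = k /\ subst_word k sig (b i) != [::]) /\
    cat_is (fun i => subst_word k sig (b i)) w.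

Definition periodic (k : nat) (weps : seq bool) : nat -> bool :=
  fun j => nth false weps (j %% k)%N.

Definition f_sigma (k : nat) (sig : nat -> bool -> seq bool)
  (weps : seq bool) (x : R) : R :=
  if `[< 0 < x <= 1 /\ tilde x <> periodic k weps >]
  then binval_cat (subst_chunks k sig (tilde x))
  else 0.

Definition dist_n (f : R -> R) (n : nat) (x y : R) : R :=
  \big[Num.max/0]_(i < n.+1) `|iter i f x - iter i f y|.

Definition separated (f : R -> R) (n : nat) (delta : R) (S : seq R) : Prop :=
  uniq S /\ (forall x, x \in S -> 0 <= x <= 1) /\
  (forall x y, x \in S -> y \in S -> x != y -> delta <= dist_n f n x y).

Definition sep_card (f : R -> R) (n : nat) (delta : R) : R :=
  sup [set (size S)%:R | S in [set S | separated f n delta S]].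

Definition entropy_delta (f : R -> R) (delta : R) : \bar R :=
  limn_esup (fun n => (ln (sep_card f n delta) / n%:R)%:E).

Definition top_entropy (f : R -> R) : \bar R :=
  lim (entropy_delta f @ 0^'+).

End Defs.

(* Main.v *)
Require Import Defs.
From HB Require Import structures.
From mathcomp Require Import all_boot all_order all_algebra.
From mathcomp Require Import all_classical all_reals all_analysis.
From mathcomp Require Import ring lra zify.
Set Implicit Arguments. Unset Strict Implicit. Unset Printing Implicit Defensive.
Import Order.TTheory GRing.Theory Num.Theory.
Import numFieldNormedType.Exports.

Lemma ocatS c m : ocat c m.+1 = ocat c m ++ c m.
Proof. by rewrite /ocat -addn1 iotaD map_cat flatten_cat /= cats0. Qed.

Lemma ocatD c m n : ocat c (m + n) = ocat c m ++ ocat (fun j => c (m + j)) n.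
Proof.
elim: n => [|n IH]; first by rewrite addn0 /ocat /= cats0.
by rewrite addnS !ocatS IH catA.
Qed.

Lemma ocat_ext c c' m : (forall j, (j < m)%N -> c j = c' j) -> ocat c m = ocat c' m.
Proof.
elim: m => [|m IH] H //; rewrite !ocatS IH ?H // => j Hj; apply: H; lia.
Qed.

Lemma size_ocat_mono c m m' : (m <= m')%N -> (size (ocat c m) <= size (ocat c m'))%N.
Proof. move=> H; rewrite -(subnKC H) ocatD size_cat; lia. Qed.

Lemma nth_ocat_mono c m m' j : (m <= m')%N -> (j < size (ocat c m))%N ->
  nth false (ocat c m') j = nth false (ocat c m) j.
Proof. by move=> H Hj; rewrite -(subnKC H) ocatD nth_cat Hj. Qed.

Lemma subst_word_ocat k sig u :
  subst_word k sig u = ocat (fun j => sig (j %% k)%N (nth false u j)) (size u).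
Proof. by []. Qed.

Lemma flatten_nil_all (s : seq (seq bool)) : flatten s = [::] -> forall x, x \in s -> x = [::].
Proof.
elim: s => [|y s IH] //= H x; move: H; case: y => //= H.
rewrite inE => /orP [/eqP -> //|]; exact: IH.
Qed.

Lemma ocat_nil c m : (forall j, (j < m)%N -> c j = [::]) -> ocat c m = [::].
Proof. elim: m => [|m IH] H //; rewrite ocatS IH ?H //= => j Hj; apply: H; lia. Qed.

Lemma flatten_nseqS (B : seq bool) t : flatten (nseq t.+1 B) = flatten (nseq t B) ++ B.
Proof.
elim: t => [|t IH]; first by rewrite /= cats0.
by change (B ++ flatten (nseq t.+1 B) = (B ++ flatten (nseq t B)) ++ B); rewrite IH catA.
Qed.

Lemma size_flatten_nseq (B : seq bool) t : size (flatten (nseq t B)) = t * size B.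
Proof. elim: t => [|t IH] //=; rewrite size_cat IH mulSn. done. Qed.

Lemma nth_flatten_nseq (B : seq bool) t i : (i < t * size B)%N ->
  nth false (flatten (nseq t B)) i = nth false B (i %% size B).
Proof.
elim: t i => [|t IH] i /=; first by rewrite mul0n.
rewrite nth_cat mulSn => Hi; case: ifP => Hl; first by rewrite modn_small.
rewrite IH; last lia.
have -> : i = (i - size B) + size B by lia.
by rewrite modnDr addnK.
Qed.

Definition unb (c : nat -> seq bool) := forall n, exists m, (n <= size (ocat c m))%N.
Definition EP (a : nat -> bool) :=
  exists N p, (0 < p)%N /\ forall n, (N <= n)%N -> a (n + p) = a n.
Definition app (u : seq bool) (s : nat -> bool) (j : nat) : bool :=
  if (j < size u)%N then nth false u j else s (j - size u)%N.

Lemma EP_iter (a : nat -> bool) N p q : (forall n, (N <= n)%N -> a (n + p)%N = a n) ->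
  forall n, (N <= n)%N -> a (n + q * p)%N = a n.
Proof.
move=> H n Hn; elim: q => [|q IH]; first by rewrite addn0.
rewrite mulSn addnCA addnC H ?IH //; lia.
Qed.

Lemma EP_sig k sig a b : (0 < k)%N -> EP a ->
  cat_is (subst_chunks k sig a) b -> unb (subst_chunks k sig a) -> EP b.
Proof.
move=> k0 [N [p [p0 Hp]]] Hcat Hunb.
set c := subst_chunks k sig a.
set P' := (p * k)%N.
have P0 : (0 < P')%N by rewrite muln_gt0 p0.
have cP : forall t j, (N <= j)%N -> c (j + t * P')%N = c j.
  move=> t j Hj; rewrite /c /subst_chunks /P'.
  have -> : ((j + t * (p * k)) %% k = j %% k)%N by rewrite mulnA addnC modnMDl.
  have -> : (t * (p * k) = (t * k) * p)%N by lia.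
  by rewrite (@EP_iter a N p (t * k) Hp).
set A := ocat c N.
set B := ocat (fun j => c (N + j)%N) P'.
have HocT : forall t, ocat c (N + t * P') = A ++ flatten (nseq t B).
  elim => [|t IH]; first by rewrite mul0n addn0 /= cats0.
  rewrite mulSn addnCA addnC ocatD IH flatten_nseqS catA; congr (_ ++ _).
  apply: ocat_ext => j _; rewrite /B.
  have -> : (N + t * P' + j = (N + j) + t * P')%N by lia.
  by rewrite cP //; lia.
have Bn : (0 < size B)%N.
  rewrite lt0n; apply/negP => /eqP B0.
  have [m Hm] := Hunb (size A).+1.
  have Hle : (m <= N + m * P')%N by nia.
  have := size_ocat_mono c Hle; rewrite HocT.
  move/(leq_trans Hm); rewrite size_cat size_flatten_nseq B0 muln0 addn0 ltnn. done.
exists (size A), (size B); split => // n Hn.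
set t := n.+2.
have Ht : t = n.+2 by [].
clearbody t.
have Hs : (n + size B < size (ocat c (N + t * P')))%N.
  rewrite HocT size_cat size_flatten_nseq Ht; nia.
rewrite -(Hcat _ _ Hs) -(Hcat (N + t * P')%N n).
all: rewrite -/c; try lia.
rewrite HocT !nth_cat; have -> : (n + size B < size A)%N = false by lia.
have -> : (n < size A)%N = false by lia.
rewrite (@nth_flatten_nseq B t (n + size B - size A)); last (rewrite Ht; nia).
rewrite (@nth_flatten_nseq B t (n - size A)); last (rewrite Ht; nia).
have -> : (n + size B - size A = (n - size A) + size B)%N by lia.
by rewrite modnDr.
Qed.

Definition Sig k sig (a b : nat -> bool) :=
  cat_is (subst_chunks k sig a) b /\ unb (subst_chunks k sig a).

Lemma size_ocat_ge (c : nat -> seq bool) n : (forall i, c i != [::]) -> (n <= size (ocat c n))%N.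
Proof.
move=> H; elim: n => [|n IH] //; rewrite ocatS size_cat.
have := H n; rewrite -size_eq0 -lt0n; by move=> H0; rewrite -addn1 leq_add.
Qed.

Section Pre.
Variables (k : nat) (sig : nat -> bool -> seq bool) (weps : seq bool).
Hypothesis k0 : (0 < k)%N.
Hypothesis Her : erasing_with k sig weps.
Hypothesis Hopt : optimality k sig.

Lemma erased_letter j : sig (j %% k)%N (nth false weps (j %% k)) = [::].
Proof.
case: Her => Hs [Hn _].
move: Hn; rewrite /subst_word Hs => /flatten_nil_all; apply.
rewrite -{1}(modn_mod j k).
apply: (map_f (fun j0 => sig (j0 %% k)%N (nth false weps j0))).
by rewrite mem_iota add0n ltn_mod k0.
Qed.

Lemma pre u v : ~ EP (app (subst_word k sig u) v) ->
  exists s, ~ EP (app u s) /\ Sig k sig (app u s) (app (subst_word k sig u) v).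
Proof.
move=> Hv.
have [b [Hb Hbv]] := Hopt v.
set base := ((size u) %/ k).+1 * k.
have Hbase : (size u < base)%N by apply: ltn_ceil.
set r := (base - size u)%N.
pose s j := if (j < r)%N then nth false weps ((size u + j) %% k)
            else nth false (b ((j - r) %/ k)) ((j - r) %% k).
set a := app u s.
set c := subst_chunks k sig a.
have c1 : forall j, (j < size u)%N -> c j = sig (j %% k)%N (nth false u j).
  by move=> j Hj; rewrite /c /subst_chunks /a /app Hj.
have c2 : forall j, (size u <= j)%N -> (j < base)%N -> c j = [::].
  move=> j H1 H2; rewrite /c /subst_chunks /a /app ltnNge H1 /= /s.
  have -> : (j - size u < r)%N by rewrite /r; lia.
  have -> : (size u + (j - size u) = j)%N by lia.
  exact: erased_letter.
have c3 : forall i t, (t < k)%N -> c (base + i * k + t)%N = sig t (nth false (b i) t).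
  move=> i t Ht; rewrite /c /subst_chunks /a /app.
  have -> : (base + i * k + t < size u)%N = false by lia.
  rewrite /s.
  have -> : (base + i * k + t - size u < r)%N = false by rewrite /r; lia.
  have -> : (base + i * k + t - size u - r = i * k + t)%N by rewrite /r; lia.
  have E2 : ((i * k + t) %% k = t)%N by rewrite modnMDl modn_small.
  have E1 : ((base + i * k + t) %% k = t)%N by rewrite /base -addnA modnMDl E2.
  by rewrite divnMDl // divn_small // addn0 E1 E2.
have Hoc : forall i, ocat c (base + i * k) =
    subst_word k sig u ++ ocat (fun i => subst_word k sig (b i)) i.
  elim => [|i IH].
    rewrite mul0n addn0 cats0 /= (_ : base = size u + r)%N; last by rewrite /r; lia.
    rewrite ocatD (@ocat_nil _ r) ?cats0.
      by rewrite subst_word_ocat; apply: ocat_ext => j Hj; rewrite c1.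
    move=> j Hj; apply: c2; rewrite /r in Hj; lia.
  rewrite mulSn addnCA addnC ocatD IH ocatS catA; congr (_ ++ _).
  rewrite subst_word_ocat (proj1 (Hb i)); apply: ocat_ext => t Ht.
  by rewrite c3 // modn_small.
exists s; split; last split.
- move=> HE; apply: Hv; apply: (EP_sig (sig:=sig) k0 HE).
  + change (cat_is c (app (subst_word k sig u) v)).
    move=> m j Hj.
    have Hm : (m <= base + m * k)%N by nia.
    rewrite -(nth_ocat_mono Hm Hj) Hoc nth_cat /app.
    case: ifP => // Hl.
    apply: Hbv.
    move: (size_ocat_mono c Hm) Hj; rewrite Hoc size_cat => H1 H2; lia.
  + change (unb c).
    move=> n; exists (base + n * k)%N; rewrite Hoc size_cat.
    have := @size_ocat_ge (fun i => subst_word k sig (b i)) n (fun i => proj2 (Hb i)); lia.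
- change (cat_is c (app (subst_word k sig u) v)).
  move=> m j Hj.
  have Hm : (m <= base + m * k)%N by nia.
  rewrite -(nth_ocat_mono Hm Hj) Hoc nth_cat /app.
  case: ifP => // Hl.
  apply: Hbv.
  move: (size_ocat_mono c Hm) Hj; rewrite Hoc size_cat => H1 H2; lia.
- change (unb c).
  move=> n; exists (base + n * k)%N; rewrite Hoc size_cat.
  have := @size_ocat_ge (fun i => subst_word k sig (b i)) n (fun i => proj2 (Hb i)); lia.
Qed.
End Pre.

Lemma EP_app u v : EP (app u v) -> EP v.
Proof.
move=> [N [p [p0 H]]]; exists N, p; split => // n Hn.
have := H (n + size u)%N ltac:(lia); rewrite /app.
have -> : (n + size u + p < size u)%N = false by lia.
have -> : (n + size u < size u)%N = false by lia.
have -> : (n + size u + p - size u = n + p)%N by lia.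
by rewrite addnK.
Qed.

Lemma app_nil v : app [::] v = v.
Proof. by apply: funext => j; rewrite /app /= subn0. Qed.

Section Reach.
Variables (k : nat) (sig : nat -> bool -> seq bool) (weps : seq bool).
Hypothesis k0 : (0 < k)%N.
Hypothesis Her : erasing_with k sig weps.
Hypothesis Hopt : optimality k sig.

Fixpoint Reach (n : nat) (a c : nat -> bool) : Prop :=
  match n with
  | 0 => a = c
  | n.+1 => exists b, ~ EP b /\ Sig k sig a b /\ Reach n b c
  end.

Lemma ReachD n n' a b c : Reach n a b -> Reach n' b c -> Reach (n + n') a c.
Proof.
elim: n a => [|n IH] a /=; first by move=> ->.
move=> [b' [H1 [H2 H3]]] H4; exists b'; split => //; split => //; exact: IH H3 H4.
Qed.

Lemma preN n u v : ~ EP v -> exists s, ~ EP (app u s) /\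
  Reach n (app u s) (app (iter n (subst_word k sig) u) v).
Proof.
elim: n u => [|n IH] u Hv.
  by exists v; split => //; move/EP_app.
have [s' [H1 H2]] := IH (subst_word k sig u) Hv.
have [s [H3 H4]] := pre k0 Her Hopt H1.
exists s; split => //; exists (app (subst_word k sig u) s'); split => //; split => //.
by rewrite iterSr.
Qed.

Lemma horseshoe_w T m (W : nat -> seq bool) v0 : ~ EP v0 ->
  (forall j, (j < m)%N -> iter T (subst_word k sig) (W j) = [::]) ->
  exists a, ~ EP a /\ forall j, (j < m)%N ->
    exists s, ~ EP (app (W j) s) /\ Reach (j * T) a (app (W j) s).
Proof.
move=> Hv0; elim: m W => [|m IH] W HW.
  by exists v0; split => // j.
have [a' [Ha' Hj]] := IH (fun j => W j.+1) (fun j Hj => HW j.+1 Hj).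
have [s [Hs HR]] := preN T (W 0%N) Ha'.
rewrite HW // app_nil in HR.
exists (app (W 0%N) s); split => //.
case => [|j] Hjm; first by exists s.
have [s' [Hs' HR']] := Hj j Hjm.
exists s'; split => //; rewrite mulSn; exact: ReachD HR HR'.
Qed.
End Reach.

Definition v0 (n : nat) : bool := [exists i : 'I_n.+1, n == 2 ^ i].

Lemma v0_nEP : ~ EP v0.
Proof.
move=> [N [p [p0 H]]].
set m := (N + p)%N.
have Hm : (m < 2 ^ m)%N by apply: ltn_expl.
have := H (2 ^ m)%N; rewrite /v0.
have -> : [exists i : 'I_(2 ^ m).+1, 2 ^ m == 2 ^ i] = true.
  apply/existsP; have Hm1 : (m < (2 ^ m).+1)%N by lia.
  by exists (Ordinal Hm1).
have -> : [exists i : 'I_(2 ^ m + p).+1, 2 ^ m + p == 2 ^ i] = false.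
  apply/negbTE/existsP => [[i /eqP Hi]].
  case: (leqP i m) => Him.
    have := leq_pexp2l (isT : 0 < 2)%N Him; lia.
  have := leq_pexp2l (isT : 0 < 2)%N Him; rewrite expnS; lia.
move=> Hc; have := Hc ltac:(lia); done.
Qed.

Local Open Scope classical_set_scope.
Local Open Scope ring_scope.

Section Reals.
Context {R : realType}.

Definition e2 (n : nat) : R := (2 ^+ n)^-1.

Lemma e2S n : e2 n = 2 * e2 n.+1.
Proof. by rewrite /e2 exprS invfM mulrA divff ?mul1r // pnatr_eq0. Qed.

Lemma e2_gt0 n : 0 < e2 n.
Proof. by rewrite /e2 invr_gt0 exprn_gt0. Qed.

Lemma e2_0 : e2 0 = 1.
Proof. by rewrite /e2 expr0 invr1. Qed.

Lemma e2_le n m : (n <= m)%N -> e2 m <= e2 n.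
Proof.
move=> H; rewrite -(subnKC H); elim: (m - n)%N => [|j IH]; first by rewrite addn0.
rewrite addnS; apply: le_trans IH; have := e2S (n + j); have := e2_gt0 (n + j).+1; lra.
Qed.

Definition Ps (a : nat -> bool) (m : nat) : R := \sum_(i < m) (a i)%:R / 2 ^+ i.+1.

Lemma PsS a m : Ps a m.+1 = Ps a m + (a m)%:R * e2 m.+1.
Proof. by rewrite /Ps big_ord_recr. Qed.

Lemma Ps0 a : Ps a 0 = 0.
Proof. by rewrite /Ps big_ord0. Qed.

Lemma term_bnd (a : nat -> bool) m : 0 <= (a m)%:R * e2 m.+1 <= e2 m.+1.
Proof. have := e2_gt0 m.+1; case: (a m : bool) => /= H; rewrite ?mul1r ?mul0r; apply/andP; split; lra. Qed.

Lemma Ps_mono a : nondecreasing_seq (Ps a).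
Proof.
apply/nondecreasing_seqP => n; rewrite PsS.
by have := term_bnd a n; lra.
Qed.

Lemma Ps_tail a m j : Ps a (m + j) <= Ps a m + (e2 m - e2 (m + j)).
Proof.
elim: j => [|j IH]; first by rewrite addn0; lra.
rewrite addnS PsS; have := term_bnd a (m + j); have := e2S (m + j); lra.
Qed.

Lemma Ps_le1 a m : Ps a m <= 1.
Proof. have := Ps_tail a 0 m; rewrite Ps0 e2_0 add0n; have := e2_gt0 m; lra. Qed.

Lemma Ps_cvg a : cvgn (Ps a).
Proof.
apply: nondecreasing_is_cvgn; first exact: Ps_mono.
by exists 1 => _ [n _ <-]; apply: Ps_le1.
Qed.

Definition bv (a : nat -> bool) : R := limn (Ps a).

Lemma val_ge a m : Ps a m <= bv a.
Proof. by apply: nondecreasing_cvgn_le; [exact: Ps_mono | exact: Ps_cvg]. Qed.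

Lemma val_le a m : bv a <= Ps a m + e2 m.
Proof.
apply: limr_le; first exact: Ps_cvg.
near=> n.
have Hn : (m <= n)%N by near: n; exact: nbhs_infty_ge.
rewrite -(subnKC Hn); have := Ps_tail a m (n - m); have := e2_gt0 (m + (n - m)); lra.
Unshelve. all: by end_near.
Qed.

End Reals.

Section Reals2.
Context {R : realType}.

Definition I1 (a : nat -> bool) := forall N, exists2 n, (N <= n)%N & a n.

Lemma Ps_agree (a a' : nat -> bool) i : (forall j, (j < i)%N -> a j = a' j) -> Ps a i = Ps a' i :> R.
Proof. by move=> H; apply: eq_bigr => j _; rewrite H. Qed.

Lemma sep_core (a a' : nat -> bool) i : (forall j, (j < i)%N -> a j = a' j) ->
  a i -> ~~ a' i -> I1 a -> (bv a' : R) < bv a.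
Proof.
move=> Hag Ha Ha' HI.
have [n Hn an] := HI i.+1.
have E : Ps a i = Ps a' i :> R by apply: Ps_agree.
have h1 := @val_le R a' i.+1; rewrite PsS (negbTE Ha') mul0r addr0 in h1.
have h2 := @val_ge R a n.+1; rewrite PsS an mul1r in h2.
have h3 : Ps a i.+1 <= Ps a n :> R by exact: (@Ps_mono R a _ _ Hn).
rewrite PsS Ha mul1r in h3.
have := e2_gt0 (R:=R) n.+1; lra.
Qed.

Lemma sep_val (a a' : nat -> bool) i : (forall j, (j < i)%N -> a j = a' j) ->
  a i -> ~~ a' i -> ~~ a' i.+1 -> e2 i.+2 <= (bv a - bv a' : R).
Proof.
move=> Hag Ha Ha' Ha2.
have E : Ps a i = Ps a' i :> R by apply: Ps_agree.
have h1 := @val_le R a' i.+2; rewrite !PsS (negbTE Ha') (negbTE Ha2) !mul0r !addr0 in h1.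
have h2 := @val_ge R a i.+1; rewrite PsS Ha mul1r in h2.
have := e2S (R:=R) i.+1; lra.
Qed.

Lemma first_diff (a a' : nat -> bool) : (exists i, a i != a' i) ->
  exists i, [/\ forall j, (j < i)%N -> a j = a' j & a i != a' i].
Proof.
move=> H; have Hex : exists i, (a i != a' i) by [].
exists (ex_minn Hex); case: ex_minnP => i Hi Hmin; split => // j Hj.
apply/eqP; apply: contraT => Hne; have := Hmin j Hne; lia.
Qed.

Lemma bv_inj (a a' : nat -> bool) : I1 a -> I1 a' -> bv a = bv a' :> R -> a = a'.
Proof.
move=> H H' Hv; apply: contrapT => Hne.
have [i [Hag Hi]] : exists i, [/\ forall j, (j < i)%N -> a j = a' j & a i != a' i].
  apply: first_diff; apply: contrapT => Hn; apply: Hne; apply: funext => j.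
  apply/eqP; apply: contrapT => Hj; apply: Hn; by exists j; apply/negP.
move: Hi; case Ea: (a i); case Ea': (a' i) => // _.
- have := sep_core Hag; rewrite Ea Ea' Hv ltxx => /(_ isT isT H); done.
- have Hag' : forall j, (j < i)%N -> a' j = a j by move=> j /Hag ->.
  have := sep_core Hag'; rewrite Ea Ea' Hv ltxx => /(_ isT isT H'); done.
Qed.

Lemma val_expansion a : I1 a -> nonterm_expansion (bv a : R) a.
Proof. by move=> H; split => //; exact: (@Ps_cvg R a). Qed.

Lemma tilde_val a : I1 a -> tilde (bv a : R) = a.
Proof.
move=> H; apply: xget_unique; first exact: val_expansion.
move=> u [Hu Hc]; apply: bv_inj => //.
by rewrite /bv; apply/cvg_lim.  
Qed.

Lemma val_bounds a : I1 a -> 0 < (bv a : R) <= 1.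
Proof.
move=> H; have [n _ an] := H 0%N.
have h1 := @val_le R a 0; rewrite Ps0 e2_0 add0r in h1.
have h2 := @val_ge R a n.+1; rewrite PsS an mul1r in h2.
have h3 : Ps a 0 <= Ps a n :> R by exact: (@Ps_mono R a _ _ (leq0n n)).
rewrite Ps0 in h3; have := e2_gt0 (R:=R) n.+1.
move=> h4; apply/andP; split; lra.
Qed.

End Reals2.

Section Reals3.
Context {R : realType}.

Lemma binval_ocat c b m : cat_is c b ->
  binval R (ocat c m) = Ps b (size (ocat c m)) :> R.
Proof. by move=> H; apply: eq_bigr => i _; rewrite (H m). Qed.

Lemma binval_cat_val c b : cat_is c b -> unb c -> binval_cat R c = bv b.
Proof.
move=> Hc Hu.
pose u m : R := Ps b (size (ocat c m)).
have -> : binval_cat R c = limn u.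
  have E : (fun m => binval R (ocat c m)) = u by apply: funext => m; rewrite (binval_ocat _ Hc).
  by rewrite /binval_cat E.
have um : nondecreasing_seq u.
  by move=> m n Hmn; apply: Ps_mono; apply: size_ocat_mono.
have uc : cvgn u.
  by apply: nondecreasing_is_cvgn => //; exists 1 => _ [n _ <-]; apply: Ps_le1.
apply/le_anti/andP; split.
  apply: limr_le => //; near=> m; exact: val_ge.
apply: limr_le; first exact: Ps_cvg.
near=> n; have [m Hm] := Hu n.
apply: le_trans (nondecreasing_cvgn_le um uc m).
exact: Ps_mono.
Unshelve. all: by end_near.
Qed.

Lemma nEP_I1 a : ~ EP a -> I1 a.
Proof.
move=> H N; apply: contrapT => HN; apply: H; exists N, 1%N; split => // n Hn.
have F : forall m, (N <= m)%N -> a m = false.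
  move=> m Hm; case E: (a m) => //; exfalso; apply: HN; by exists m.
by rewrite !F //; lia.
Qed.

Lemma periodic_EP k (weps : seq bool) : (0 < k)%N -> EP (Defs.periodic k weps).
Proof.
move=> k0; exists 0%N, k; split => // n _.
by rewrite /Defs.periodic modnDr.
Qed.

Lemma f_val k sig weps a b : (0 < k)%N -> ~ EP a -> Sig k sig a b ->
  f_sigma k sig weps (bv a : R) = bv b.
Proof.
move=> k0 Ha [Hc Hu]; rewrite /f_sigma.
have I := nEP_I1 Ha.
rewrite asboolT; last first.
  split; first exact: val_bounds.
  by rewrite tilde_val // => E; apply: Ha; rewrite E; apply: periodic_EP.
rewrite tilde_val //; exact: binval_cat_val.
Qed.

Lemma iter_val k sig weps n a c : (0 < k)%N -> ~ EP a -> Reach k sig n a c ->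
  iter n (f_sigma k sig weps) (bv a : R) = bv c.
Proof.
move=> k0; elim: n a => [|n IH] a Ha; first by move=> /= ->.
move=> [b [Hb [HS HR]]].
by rewrite iterSr (f_val _ k0 Ha HS) IH.
Qed.

End Reals3.

Section Reals4.
Context {R : realType}.

Lemma binval_Ps w : binval R w = Ps (fun j => nth false w j) (size w).
Proof. by []. Qed.

Lemma binval_bnd w : 0 <= binval R w <= 1.
Proof.
rewrite binval_Ps; apply/andP; split; last exact: Ps_le1.
by rewrite -(Ps0 (fun j => nth false w j)); apply: Ps_mono.
Qed.

Lemma binval_cat_le w r : binval R w <= binval R (w ++ r).
Proof.
rewrite !binval_Ps size_cat.
rewrite (@Ps_agree R (fun j => nth false w j) (fun j => nth false (w ++ r) j)).
  by apply: Ps_mono; apply: leq_addr.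
by move=> j Hj; rewrite nth_cat Hj.
Qed.

Lemma binval_cat_bnd c : 0 <= binval_cat R c <= 1.
Proof.
pose u m := binval R (ocat c m).
have um : nondecreasing_seq u.
  by apply/nondecreasing_seqP => m; rewrite /u ocatS binval_cat_le.
have uc : cvgn u.
  apply: nondecreasing_is_cvgn => //; exists 1 => _ [n _ <-].
  by have /andP[] := binval_bnd (ocat c n).
apply/andP; split.
  apply: le_trans (nondecreasing_cvgn_le um uc 0%N).
  by have /andP[] := binval_bnd (ocat c 0).
apply: limr_le => //; near=> m.
by have /andP[] := binval_bnd (ocat c m).
Unshelve. all: by end_near.
Qed.

Lemma f01 k sig weps (x : R) : 0 <= f_sigma k sig weps x <= 1.
Proof.
rewrite /f_sigma; case: ifP => _; first exact: binval_cat_bnd.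
by rewrite lexx ler01.
Qed.

Lemma iter01 k sig weps i (x : R) : 0 <= x <= 1 ->
  0 <= iter i (f_sigma k sig weps) x <= 1.
Proof. by case: i => [|i] //= _; apply: f01. Qed.

Lemma sep_bound (f : R -> R) (d : R) n S : 0 < d ->
  (forall i x, 0 <= x <= 1 -> 0 <= iter i f x <= 1) ->
  Defs.separated f n d S -> (size S <= (Num.truncn d^-1).+1 ^ n.+1)%N.
Proof.
move=> d0 Hf [Su [S01 Ssep]].
set K := (Num.truncn d^-1).+1.
pose phi (x : R) : {ffun 'I_n.+1 -> 'I_K} :=
  [ffun i : 'I_n.+1 => inord (Num.truncn (iter i f x / d))].
have Htr : forall i x, x \in S -> (Num.truncn (iter i f x / d) < K)%N.
  move=> i x Hx; rewrite /K ltnS; apply: le_truncn.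
  have /andP[_ h] := Hf i x (S01 x Hx).
  by rewrite -[X in _ <= X]mul1r ler_pM2r // invr_gt0.
have Hinj : {in S &, injective phi}.
  move=> x y Hx Hy Hxy; apply: contrapT => /eqP Hne.
  have := Ssep x y Hx Hy Hne; apply/negP; rewrite -ltNge /dist_n.
  apply: bigmax_lt => // i _.
  have := congr1 (fun g : {ffun 'I_n.+1 -> 'I_K} => nat_of_ord (g i)) Hxy; rewrite /phi !ffunE /=.
  rewrite !inordK ?Htr // => Htreq.
  have /andP[hx0 _] := Hf i x (S01 x Hx).
  have /andP[hy0 _] := Hf i y (S01 y Hy).
  have hx := truncn_itv (divr_ge0 hx0 (ltW d0)).
  have hy := truncn_itv (divr_ge0 hy0 (ltW d0)).
  rewrite Htreq in hx.
  move: hx hy => /andP[hx1 hx2] /andP[hy1 hy2].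
  set t := Num.truncn (iter i f y / d) in hx1 hx2 hy1 hy2.
  rewrite -natr1 in hx2 hy2.
  set X := iter i f x / d in hx1 hx2; set Y := iter i f y / d in hy1 hy2.
  have E1 : iter i f x = X * d by rewrite /X divfK // gt_eqF.
  have E2 : iter i f y = Y * d by rewrite /Y divfK // gt_eqF.
  rewrite E1 E2.
  rewrite ltr_norml; apply/andP; split; nra.
have Hu : uniq (map phi S) by rewrite (map_inj_in_uniq Hinj).
have := card_uniqP Hu.
rewrite size_map => <-.
by apply: leq_trans (max_card _) _; rewrite card_ffun !card_ord.
Qed.

End Reals4.

Section Reals5.
Context {R : realType}.

Lemma sep_card_ge (f : R -> R) (d : R) n S : 0 < d ->
  (forall i x, 0 <= x <= 1 -> 0 <= iter i f x <= 1) ->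
  Defs.separated f n d S -> (size S)%:R <= sep_card f n d.
Proof.
move=> d0 Hf HS; rewrite /sep_card.
set E := [set _ | _ in _].
have HE : has_sup E.
  split; first by exists (size S)%:R, S.
  exists ((Num.truncn d^-1).+1 ^ n.+1)%:R => _ [T HT <-].
  by rewrite ler_nat; apply: sep_bound HT.
by apply: sup_upper_bound => //; exists S.
Qed.

Lemma esup_ge (u : nat -> \bar R) c :
  (forall N, exists2 n, (N <= n)%N & (c <= u n)%E) -> (c <= limn_esup u)%E.
Proof.
move=> H; rewrite limn_esup_lim; apply: lime_ge; first exact: is_cvg_esups.
apply: nearW => N; have [n Hn Hc] := H N.
apply: le_trans Hc _; apply: ereal_sup_ubound; by exists n.
Qed.

Lemma top_inf (f : R -> R) :
  (forall B : R, exists2 d : R, 0 < d & forall d', 0 < d' -> d' < d ->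
     (B%:E <= entropy_delta f d')%E) ->
  top_entropy f = +oo%E.
Proof.
move=> H; rewrite /top_entropy; apply: cvg_lim => //.
apply/cvgeyPge => B; have [d d0 Hd] := H B.
near=> x; apply: Hd.
  by near: x; apply: nbhs_right_gt.
by near: x; apply: nbhs_right_lt.
Unshelve. all: by end_near.
Qed.

End Reals5.

Definition cyl l (p : l.-tuple bool) : seq bool :=
  mkseq (fun i => if odd i then false else nth false p i./2) (l.*2).

Lemma size_cyl l (p : l.-tuple bool) : size (cyl p) = l.*2.
Proof. exact: size_mkseq. Qed.

Lemma app_cyl l (p : l.-tuple bool) s j : (j < l.*2)%N ->
  app (cyl p) s j = if odd j then false else nth false p j./2.
Proof. by move=> Hj; rewrite /app size_cyl Hj nth_mkseq. Qed.

Lemma tuple_diff l (p p' : l.-tuple bool) : p != p' ->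
  exists2 t, (t < l)%N & nth false p t != nth false p' t.
Proof.
move=> Hne; apply: contrapT => Hn; move/eqP: Hne; apply.
apply: val_inj; apply: (@eq_from_nth _ false); first by rewrite !size_tuple.
move=> t; rewrite size_tuple => Ht; apply/eqP; apply: contrapT => Hd; apply: Hn.
by exists t => //; apply/negP.
Qed.

Lemma cyl_sep {R : realType} l (p p' : l.-tuple bool) s s' : p != p' ->
  I1 (app (cyl p) s) -> I1 (app (cyl p') s') ->
  e2 (l.*2) <= `|bv (app (cyl p) s) - bv (app (cyl p') s')| :> R.
Proof.
move=> Hne I I'; have [t Ht Hd] := tuple_diff Hne.
set b := app (cyl p) s; set b' := app (cyl p') s'.
have Ht2 : (t.*2 < l.*2)%N by rewrite ltn_double.
have Hbt : b t.*2 != b' t.*2 by rewrite /b /b' !app_cyl // odd_double doubleK.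
have [i [Hag Hi]] := @first_diff b b' (ex_intro _ t.*2 Hbt).
have Hit : (i <= t.*2)%N.
  rewrite leqNgt; apply/negP => H; move: Hbt; rewrite Hag //; rewrite eqxx //.
have HiL : (i.+1 < l.*2)%N.
  move: Hit Ht; rewrite -!muln2; lia.
have Hodd : odd i = false.
  apply: contraTF Hi => Ho; rewrite /b /b' !app_cyl ?Ho //; lia.
have Hb1 : b i.+1 = false by rewrite /b app_cyl //= Hodd.
have Hb1' : b' i.+1 = false by rewrite /b' app_cyl //= Hodd.
have He : e2 l.*2 <= e2 i.+2 :> R by apply: e2_le; lia.
move: Hi; case Ebi: (b i); case Ebi': (b' i) => // _.
- have := @sep_val R b b' i Hag; rewrite Ebi Ebi' Hb1' => /(_ isT isT isT) H.
  by apply: le_trans He (le_trans H (ler_norm _)).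
- have Hag' : forall j, (j < i)%N -> b' j = b j by move=> j /Hag ->.
  have := @sep_val R b' b i Hag'; rewrite Ebi Ebi' Hb1 => /(_ isT isT isT) H.
  by rewrite distrC; apply: le_trans He (le_trans H (ler_norm _)).
Qed.

Local Close Scope classical_set_scope.

Theorem mainTheorem18 (R : realType) (k : nat) (sig : nat -> bool -> seq bool)
    (weps : seq bool) :
  (2 <= k)%N ->
  completely_erasing k sig weps ->
  weps != nseq k true ->
  optimality k sig ->
  (forall M : R, 0 < M -> exists N : nat, forall (w : seq bool) (n : nat),
      (N < size w)%N -> vanishing_order k sig w n ->
      M < (size w)%:R / n%:R) ->
  top_entropy (f_sigma (R := R) k sig weps) = +oo%E.
Proof.
move=> hk [Her Hcomp] _ Hopt Hvan.
have k0 : (0 < k)%N by lia.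
set f := f_sigma k sig weps.
have Hf01 : forall i (x : R), 0 <= x <= 1 -> 0 <= iter i f x <= 1.
  by move=> i x; apply: iter01.
apply: top_inf => B.
set c := ln (2 : R).
have c0 : 0 < c by apply: ln_gt0; lra.
set M := 2 * (`|B| + 1) / c.
have M0 : 0 < M by rewrite /M divr_gt0 // mulr_gt0 //; have := normr_ge0 B; lra.
have [N HN] := Hvan M M0.
set l := N.+1.
have Hc' : forall w, exists n, iter n (subst_word k sig) w == [::].
  by move=> w; have [n Hn] := Hcomp w; exists n; apply/eqP.
pose eps (w : seq bool) : nat := ex_minn (Hc' w).
have Heps : forall w, vanishing_order k sig w (eps w).
  move=> w; rewrite /eps; case: ex_minnP => n /eqP Hn Hmin; split => // m Hm.
  by apply: Hmin; apply/eqP.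
have iter_nil : forall n, iter n (subst_word k sig) [::] = [::].
  by elim => //= n ->.
set T := (\max_(p : l.-tuple bool) eps (cyl p))%N.
have HT : forall p : l.-tuple bool, iter T (subst_word k sig) (cyl p) = [::].
  move=> p; have Hle : (eps (cyl p) <= T)%N.
    exact: (@leq_bigmax _ (fun p => eps (cyl p)) p).
  by rewrite -(subnK Hle) iterD (proj1 (Heps _)) iter_nil.
have Hcard : (0 < #|{:l.-tuple bool}|)%N by rewrite card_tuple card_bool expn_gt0.
have [pstar Hps] := @bigop.eq_bigmax _ (fun p : l.-tuple bool => eps (cyl p)) Hcard.
rewrite -/T in Hps.
have HMT := HN (cyl pstar) T.
rewrite size_cyl in HMT.
have {HMT} HMT : M < (l.*2)%:R / T%:R.
  apply: HMT; first by rewrite /l -muln2; lia.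
  by rewrite Hps; apply: Heps.
have T0 : (0 < T)%N.
  case: (posnP T) => // T0; move: HMT; rewrite T0 invr0 mulr0; lra.
have HMT' : M * T%:R < (l.*2)%:R by rewrite -ltr_pdivlMr // ltr0n.
have Hkey : (`|B| + 1) * T%:R < l%:R * c.
  have E : M * T%:R * c = 2 * ((`|B| + 1) * T%:R).
    by rewrite /M; field; rewrite gt_eqF.
  have := HMT'; rewrite -(ltr_pM2r c0) E -muln2 natrM.
  lra.
exists (e2 (l.*2)); first exact: e2_gt0.
move=> d' d'0 d'd.
rewrite /entropy_delta; apply: esup_ge => N0.
set m := N0.+1.
set n := (m * T)%N.
exists n; first by rewrite /n /m; nia.
rewrite lee_fin.
pose W (om : {ffun 'I_m -> l.-tuple bool}) j := cyl (om (inord j)).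
have HW : forall om j, (j < m)%N -> iter T (subst_word k sig) (W om j) = [::].
  by move=> om j _; apply: HT.
pose P (om : {ffun 'I_m -> l.-tuple bool}) (a : nat -> bool) :=
  ~ EP a /\ forall j, (j < m)%N ->
    exists s, ~ EP (app (W om j) s) /\ Reach k sig (j * T) a (app (W om j) s).
have Hex : forall om, exists a, P om a.
  by move=> om; apply: (horseshoe_w k0 Her Hopt v0_nEP (HW om)).
pose A om := xget v0 (P om).
have HA : forall om, P om (A om) by move=> om; apply: xgetPex.
pose X om : R := bv (A om).
have Key : forall om om', om != om' -> d' <= dist_n f n (X om) (X om').
  move=> om om' Hne.
  have [j Hj] : exists j, om j != om' j.
    apply: contrapT => H; move/eqP: Hne; apply; apply/ffunP => j.
    apply/eqP; apply: contrapT => Hj; apply: H; exists j; exact/negP.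
  have [Ha Hja] := HA om; have [Ha' Hja'] := HA om'.
  have [s [Hs HR]] := Hja j (ltn_ord j).
  have [s' [Hs' HR']] := Hja' j (ltn_ord j).
  rewrite /W inord_val in Hs HR Hs' HR'.
  have E1 := iter_val weps k0 Ha HR.
  have E2 := iter_val weps k0 Ha' HR'.
  have Hsep := cyl_sep (R := R) Hj (nEP_I1 Hs) (nEP_I1 Hs').
  have Hjn : (j * T < n.+1)%N by rewrite /n; have := ltn_ord j; nia.
  apply: le_trans (ltW d'd) _; apply: le_trans Hsep _.
  rewrite /X -E1 -E2 /dist_n.
  exact: (le_bigmax _ (fun i : 'I_n.+1 => `|iter i f (bv (A om)) - iter i f (bv (A om'))|) (Ordinal Hjn)).
have Xinj : injective X.
  move=> om om' HX; apply: contrapT => /eqP Hne.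
  have := Key om om' Hne; rewrite HX.
  have : dist_n f n (X om') (X om') <= 0.
    by apply: bigmax_le => // i _; rewrite subrr normr0.
  lra.
set Sx := map X (enum {: {ffun 'I_m -> l.-tuple bool}}).
have Hsep : Defs.separated f n d' Sx.
  split; first by rewrite map_inj_uniq ?enum_uniq.
  split.
    move=> x /mapP [om _ ->].
    have /andP[h1 h2] := val_bounds (R:=R) (nEP_I1 (HA om).1).
    by rewrite /X (ltW h1) h2.
  move=> x y /mapP [om _ ->] /mapP [om' _ ->] Hxy; apply: Key.
  by apply: contraNneq Hxy => ->.
have Hsize : size Sx = ((2 ^ l) ^ m)%N.
  by rewrite size_map -cardE card_ffun card_tuple card_bool card_ord.
have Hge := sep_card_ge d'0 Hf01 Hsep.
rewrite Hsize in Hge.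
set Z : R := ((2 ^ l) ^ m)%N%:R in Hge.
have Z0 : 0 < Z by rewrite /Z ltr0n !expn_gt0.
have Hln : ln Z <= ln (sep_card f n d').
  by rewrite ler_ln // posrE //; apply: lt_le_trans Hge.
have EZ : ln Z = c * (l * m)%N%:R.
  by rewrite /Z -expnM natrX lnXn // mulr_natr.
have n0 : 0 < n%:R :> R by rewrite ltr0n /n muln_gt0.
rewrite ler_pdivlMr //.
apply: le_trans Hln; rewrite EZ /n !natrM.
have hT : 0 < T%:R :> R by rewrite ltr0n.
have hm : 1 <= m%:R :> R by rewrite ler1n.
have hB := ler_norm B.
have hmT : 0 < m%:R * T%:R :> R by apply: mulr_gt0; lra.
nra.
Qed.
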